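(* Let $q$ be an odd prime power and $n\ge 1$ an integer, and let $\mu\in\mathbb{F}_{q^2}$ with $\mu^2=-1$. (i) If $q\equiv1\pmod 4$ and $\gcd(n+1,q(q^2-1)/2)=1$, then $C_n(a)$ is LCD for every $a\in\mathbb{F}_q\setminus\{\mu+2,-\mu+2,\mu-2,-\mu-2\}$. (ii) If $q\equiv 3\pmod 4$, $\gcd(n+1,q)=1$, and $\gcd(n+1,(q^4-1)/2)$ divides $(q-1)/2$, then $C_n(a)$ is LCD for every $a\in\mathbb{F}_q$.
   Context: For $a\in\mathbb{F}_q$ and $n \ge 1$, $T_n(a)$ denotes the $n\times n$ symmetric tridiagonal Toeplitz matrix over $\mathbb{F}_q$ with all diagonal entries equal to $a$, all entries on the first super- and sub-diagonals equal to $1$, and all other entries $0$. $C_n(a)$ is the $[2n,n]$ linear code over $\mathbb{F}_q$ with generator matrix $[I_n \mid T_n(a)]$. A linear code $C$ is LCD if $C\cap C^\perp=\{0\}$ (Euclidean dual). *)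

(* Defs.v *)
From mathcomp Require Import all_boot all_order all_algebra all_field.
Set Implicit Arguments. Unset Strict Implicit. Unset Printing Implicit Defensive.
Import GRing.Theory.
Local Open Scope ring_scope.

Definition tridiag (F : fieldType) (n : nat) (a : F) : 'M[F]_n :=
  \matrix_(i < n, j < n)
    if i == j then a
    else if ((i.+1 == j)%N || (j.+1 == i)%N) then 1 else 0.

Definition gen_Cn (F : fieldType) (n : nat) (a : F) : 'M[F]_(n, n + n) :=
  row_mx 1%:M (tridiag n a).

Definition in_code (F : fieldType) (k m : nat) (G : 'M[F]_(k, m)) (c : 'rV[F]_m) :=
  (c <= G)%MS.

Definition in_dual_code (F : fieldType) (k m : nat) (G : 'M[F]_(k, m)) (v : 'rV[F]_m) :=
  forall c : 'rV[F]_m, in_code G c -> v *m c^T = 0.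

Definition is_LCD (F : fieldType) (k m : nat) (G : 'M[F]_(k, m)) :=
  forall v : 'rV[F]_m, in_code G v -> in_dual_code G v -> v = 0.

(* Main.v *)
Require Import Defs.
From mathcomp Require Import all_boot all_order all_algebra all_field all_solvable.
From mathcomp Require Import zify ring.
Import GRing.Theory.
Local Open Scope ring_scope.
Set Implicit Arguments. Unset Strict Implicit. Unset Printing Implicit Defensive.


Fixpoint cheb (R : nzRingType) (x : R) (k : nat) : R :=
  match k return R with
  | 0 => 0
  | k1.+1 => match k1 with 0 => 1 | k2.+1 => x * cheb x k1 - cheb x k2 end
  end.

Arguments cheb {R} x k.
Lemma chebSS (R : nzRingType) (x : R) k : cheb x k.+2 = x * cheb x k.+1 - cheb x k.
Proof. by []. Qed.

Lemma cheb_closed (R : comNzRingType) (z t : R) k :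
  z * t = 1 -> cheb (z + t) k * (z - t) = z ^+ k - t ^+ k.
Proof.
move=> zt.
suff: cheb (z + t) k * (z - t) = z ^+ k - t ^+ k /\
      cheb (z + t) k.+1 * (z - t) = z ^+ k.+1 - t ^+ k.+1 by case.
elim: k => [|k [IH1 IH2]]; first by rewrite /= mul0r mul1r !expr0 expr1 subrr.
split=> //; rewrite chebSS mulrBl -mulrA IH2 IH1 !exprS.
have E : z ^+ k - t ^+ k = (z * t) * (z ^+ k - t ^+ k) by rewrite zt mul1r.
rewrite [X in _ - X = _]E; ring.
Qed.

Lemma cheb_double (R : comNzRingType) (z : R) k :
  z * z = 1 -> cheb (z + z) k.+1 = k.+1%:R * z ^+ k.
Proof.
move=> zz.
suff: cheb (z + z) k.+1 = k.+1%:R * z ^+ k /\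
      cheb (z + z) k.+2 = k.+2%:R * z ^+ k.+1 by case.
elim: k => [|k [IH1 IH2]].
  split; first by rewrite expr0 mulr1.
  by rewrite chebSS /= mulr1 subr0 expr1 mulr2n mulrDl mul1r.

split=> //; rewrite chebSS IH2 IH1 !exprS.
have -> : k.+1%:R * z ^+ k = k.+1%:R * z ^+ k * (z * z) by rewrite zz mulr1.
rewrite -[k.+3]addn3 -[k.+2]addn2 -[k.+1]addn1 !natrD. ring.
Qed.

Lemma pow_gcd (R : nzRingType) (w : R) m k :
  (0 < m)%N -> w ^+ m = 1 -> w ^+ k = 1 -> w ^+ gcdn m k = 1.
Proof.
move=> m0 Hm Hk; case: (egcdnP k m0) => km kn E _.
have : w ^+ (km * m) = w ^+ (kn * k + gcdn m k) by rewrite E.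
rewrite exprD [(km * m)%N]mulnC [(kn * k)%N]mulnC exprM Hm expr1n.
by rewrite exprM Hk expr1n mul1r => <-.
Qed.

Definition Ext (L : nzRingType) n (y : 'rV[L]_n.+1) (k : nat) : L :=
  if k is k'.+1 then (if (k' < n.+1)%N then y 0 (inord k') else 0) else 0.

Lemma sum_ind (L : nzRingType) n (y : 'rV[L]_n.+1) k :
  \sum_(i < n.+1) y 0 i * ((i : nat) == k)%:R = Ext y k.+1.
Proof.
rewrite /=; case: ltnP => hk.
  rewrite (bigD1 (inord k)) //= inordK // eqxx mulr1 big1 ?addr0 // => i Hi.
  have /negbTE -> : (i : nat) != k by apply: contra Hi => /eqP <-; rewrite inord_val.
  by rewrite mulr0.
by rewrite big1 // => i _; rewrite ltn_eqF ?mulr0 // (leq_trans (ltn_ord i)).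
Qed.

Lemma sum_indS (L : nzRingType) n (y : 'rV[L]_n.+1) k :
  \sum_(i < n.+1) y 0 i * (((i : nat).+1 == k))%:R = Ext y k.
Proof.
case: k => [|k]; last by rewrite -sum_ind.
by rewrite big1 // => i _; rewrite mulr0.
Qed.

Lemma tri_entry (L : fieldType) n (b : L) (i j : 'I_n) :
  tridiag n b i j = b * ((i : nat) == j)%:R + ((i : nat).+1 == j)%:R + ((i : nat) == j.+1)%:R.
Proof.
rewrite mxE; have -> : (i == j) = ((i : nat) == j) by [].
have -> : (((j : nat).+1 == i) = ((i : nat) == j.+1)) by rewrite eq_sym.
case: (ltngtP i j) => h.
- have -> : ((i : nat) == j.+1) = false by apply/eqP; lia.
  by rewrite mulr0 add0r addr0 orbF; case: (_ == _).
- have -> : ((i : nat).+1 == j) = false by apply/eqP; lia.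
  by rewrite mulr0 add0r add0r /=; case: (_ == _).
- have -> : ((i : nat).+1 == j) = false by apply/eqP; lia.
  have -> : ((i : nat) == j.+1) = false by apply/eqP; lia.
  by rewrite mulr1 !addr0.
Qed.

Lemma eigen_cheb (L : fieldType) n (y : 'rV[L]_n.+1) (b c : L) :
  y != 0 -> y *m tridiag n.+1 b = c *: y -> cheb (c - b) n.+2 = 0.
Proof.
move=> y0 Hy.
set x := c - b.
have rec : forall k, (k < n.+1)%N -> Ext y k.+2 = x * Ext y k.+1 - Ext y k.
  move=> k hk.
  have := congr1 (fun M : 'rV[L]_n.+1 => M 0 (Ordinal hk)) Hy.
  rewrite !mxE /=.
  rewrite (eq_bigr (fun i => b * (y 0 i * ((i:nat) == k)%:R) + y 0 i * ((i : nat).+1 == k)%:R + y 0 i * ((i:nat) == k.+1)%:R)); last first.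
    by move=> i _; rewrite tri_entry /=; ring.
  rewrite !big_split /= -mulr_sumr sum_ind sum_indS sum_ind.
  have -> : y 0 (Ordinal hk) = Ext y k.+1.
    by rewrite /= hk; congr (y 0 _); apply: val_inj; rewrite /= inordK.
  move=> H; rewrite /x mulrBl -H /=; ring.
have ind : forall k, (k <= n.+1)%N ->
    Ext y k = Ext y 1 * cheb x k /\ Ext y k.+1 = Ext y 1 * cheb x k.+1.
  elim => [|k IH] hk; first by split; [rewrite /= mulr0 | rewrite /= mulr1].
  case: (IH (ltnW hk)) => I1 I2; split => //.
  by rewrite rec // I1 I2 chebSS; ring.
have := (ind n.+1 (leqnn _)).2.
have -> : Ext y n.+2 = 0 by rewrite /= ltnn.
move/esym/eqP; rewrite mulf_eq0 => /orP [/eqP E1|/eqP //].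
case/negP: y0; apply/eqP/rowP => i; rewrite mxE.
have := (ind i (ltnW (ltn_ord i))).2; rewrite E1 mul0r /= ltn_ord inord_val.
by [].
Qed.


Lemma tri_sym (F : fieldType) n (a : F) : (tridiag n a)^T = tridiag n a.
Proof. by apply/matrixP => i j; rewrite !mxE eq_sym orbC. Qed.

Lemma LCD_of (F : fieldType) n (a : F) :
  (forall u : 'rV[F]_n, u *m (1%:M + tridiag n a *m tridiag n a) = 0 -> u = 0) ->
  is_LCD (gen_Cn n a).
Proof.
move=> H v /submxP [u ->] Hd.
have HG : u *m gen_Cn n a *m (gen_Cn n a)^T = 0.
  apply/rowP => i.
  transitivity ((u *m gen_Cn n a *m (row i (gen_Cn n a))^T) 0 0).
    by rewrite !mxE; apply: eq_bigr => k _; rewrite !mxE.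
  by rewrite Hd ?mxE //; apply: row_sub.
move: HG; rewrite -mulmxA /gen_Cn tr_row_mx mul_row_col trmx1 mulmx1 tri_sym => HG.
by rewrite (H u HG) mul0mx.
Qed.

Lemma root2 (L : closedFieldType) (x : L) : exists z : L, z * (x - z) = 1.
Proof.
have [z Hz] := @solve_monicpoly L 2 (fun i => if i == 0%N then -1 else x) isT.
exists z; move: Hz; rewrite !big_ord_recr big_ord0 /= expr0 expr1 mulr1 add0r => Hz.
by rewrite mulrBr -expr2 Hz mulrC; ring.
Qed.

Lemma sqrtm1 (L : closedFieldType) : exists c : L, c ^+ 2 = -1.
Proof.
have [z Hz] := @solve_monicpoly L 2 (fun i => if i == 0%N then -1 else 0) isT.
by exists z; move: Hz; rewrite !big_ord_recr big_ord0 /= expr0 mulr1 mul0r add0r addr0.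
Qed.

Lemma main_step (F : fieldType) (L : closedFieldType) (f : {rmorphism F -> L}) n
    (a : F) (u : 'rV[F]_n.+1) :
  u != 0 -> u *m (1%:M + tridiag n.+1 a *m tridiag n.+1 a) = 0 ->
  exists c z : L, [/\ c ^+ 2 = -1, z * ((c - f a) - z) = 1 & cheb (c - f a) n.+2 = 0].
Proof.
move=> u0 Hu.
set u' := map_mx f u.
have u'0 : u' != 0 by rewrite map_mx_eq0.
have Tm : map_mx f (tridiag n.+1 a) = tridiag n.+1 (f a).
  by apply/matrixP => i j; rewrite !mxE; case: ifP => // _; case: ifP => _; rewrite ?rmorph1 ?rmorph0.
set T' := tridiag n.+1 (f a).
have H' : u' *m T' *m T' = - u'.
  have : map_mx f (u *m (1%:M + tridiag n.+1 a *m tridiag n.+1 a)) = 0 by rewrite Hu map_mx0.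
  rewrite map_mxM map_mxD map_mx1 map_mxM Tm mulmxDr mulmx1 -mulmxA => /eqP.
  by rewrite addrC addr_eq0 => /eqP.
have [c0 Hc0] := sqrtm1 L.
pose y1 := u' *m T' + c0 *: u'.
have [c [y [Hc y0 Hy]]] : exists c (y : 'rV[L]_n.+1), [/\ c ^+ 2 = -1, y != 0 & y *m T' = c *: y].
  case: (eqVneq y1 0) => [y10|y1n0].
    exists (- c0), u'; split => //; first by rewrite sqrrN.
    by move/eqP: y10; rewrite /y1 addr_eq0 scaleNr => /eqP.
  exists c0, y1; split => //.
  rewrite /y1 mulmxDl H' -scalemxAl scalerDr scalerA -expr2 Hc0 scaleN1r.
  by rewrite addrC.
have [z Hz] := root2 (c - f a).
exists c, z; split => //.
exact: eigen_cheb y0 Hy.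
Qed.

Lemma zcases (L : fieldType) (z t : L) m :
  z * t = 1 -> cheb (z + t) m.+1 = 0 -> (m.+1)%:R != 0 :> L ->
  z != t /\ (z ^+ 2) ^+ m.+1 = 1.
Proof.
move=> zt Hc Hm.
have z0 : z != 0 by apply/eqP => z0; move: zt; rewrite z0 mul0r => /eqP; rewrite eq_sym oner_eq0.
case: (eqVneq z t) => [Ezt|ne].
  move: Hc; rewrite -Ezt cheb_double; last by rewrite {2}Ezt.
  by move/eqP; rewrite mulf_eq0 (negbTE Hm) expf_eq0 (negbTE z0) andbF.
split => //.
have := cheb_closed m.+1 zt; rewrite Hc mul0r => /eqP; rewrite eq_sym subr_eq0 => /eqP E.
by rewrite exprAC expr2 {2}E -exprMn zt expr1n.
Qed.


Lemma quad_frob (L : fieldType) N (x z : L) :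
  [pchar L].-nat N -> x ^+ N = x -> z * (x - z) = 1 -> z ^+ N = z \/ z ^+ N = x - z.
Proof.
move=> pN xN zx; set u := z ^+ N.
have ux : u * (x - u) = 1.
  have : (z * (x - z)) ^+ N = 1 by rewrite zx expr1n.
  by rewrite exprMn exprDn_pchar // exprNn_pchar // xN.
have : (u - z) * (x - u - z) = 0.
  have e : (u - z) * (x - u - z) = u * (x - u) - z * (x - z) by ring.
  by rewrite e ux zx subrr.
move/eqP; rewrite mulf_eq0 => /orP [/eqP H|/eqP H].
  by left; apply/eqP; rewrite -subr_eq0 H.
right; apply/eqP; rewrite -subr_eq0.
have -> : u - (x - z) = - (x - u - z) by ring.
by rewrite H oppr0.
Qed.

Lemma nz_of (L : fieldType) (x z : L) : z * (x - z) = 1 -> z != 0.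
Proof. by move=> zx; apply/eqP => z0; move: zx; rewrite z0 mul0r => /eqP; rewrite eq_sym oner_eq0. Qed.

Lemma case1 (L : fieldType) N (x z : L) m :
  [pchar L].-nat N -> odd N -> x ^+ N = x -> z * (x - z) = 1 -> z != x - z ->
  (z ^+ 2) ^+ m.+1 = 1 -> coprime m.+1 ((N - 1) %/ 2) -> coprime m.+1 ((N + 1) %/ 2) -> False.
Proof.
move=> pN oN xN zx ne wm c1 c2.
have z0 := nz_of zx.
have N2 : (N %% 2 = 1)%N by rewrite modn2 oN.
have kill : forall K, (z ^+ 2) ^+ K = 1 -> coprime m.+1 K -> False.
  move=> K wK cK; have := pow_gcd (ltn0Sn m) wm wK; rewrite (eqP cK) expr1 => zz.
  by move/negP: ne; apply; apply/eqP; apply: (mulfI z0); rewrite zx -expr2 zz.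
case: (quad_frob pN xN zx) => [E|E].
  apply: (kill ((N - 1) %/ 2)%N _ c1).
  rewrite -exprM (_ : (2 * ((N - 1) %/ 2) = N - 1)%N); last by lia.
  apply: (mulIf z0); rewrite mul1r -exprSr (_ : (N - 1).+1 = N)%N ?E //; lia.
apply: (kill ((N + 1) %/ 2)%N _ c2).
rewrite -exprM (_ : (2 * ((N + 1) %/ 2) = N.+1)%N); last by lia.
by rewrite exprSr E mulrC zx.
Qed.

Lemma case2 (F : finFieldType) (L : fieldType) (f : {rmorphism F -> L}) (a : F) (c z : L) m :
  [pchar L].-nat #|F| -> (#|F| %% 4 = 3)%N -> c ^+ 2 = -1 -> z * ((c - f a) - z) = 1 ->
  (z ^+ 2) ^+ m.+1 = 1 -> (gcdn m.+1 ((#|F| ^ 4 - 1) %/ 2) %| (#|F| - 1) %/ 2)%N ->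
  2%:R != 0 :> L -> False.
Proof.
set q := #|F|.
move=> pq q4 c2 zx wm gd two.
set x := c - f a.
set k := ((q - 1) %/ 2)%N.
have qk : q = (2 * k).+1 by rewrite /k; lia.
have kodd : odd k.
  have : (k %% 2 = 1)%N by rewrite /k; lia.
  by rewrite modn2; case: (odd k).
have faq : f a ^+ q = f a by rewrite -rmorphXn expf_card.
have cq : c ^+ q = - c by rewrite qk exprSr exprM c2 -signr_odd kodd expr1 mulN1r.
have xq : x ^+ q = - c - f a by rewrite /x exprDn_pchar // exprNn_pchar // cq faq.
have pq2 : [pchar L].-nat ((q ^ 2)%N) by rewrite pnatX pq.
have xq2 : x ^+ ((q ^ 2)%N) = x.
  by rewrite -mulnn exprM xq exprDn_pchar // !exprNn_pchar // cq faq opprK.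
have z0 := nz_of zx.
set t := x - z.
have xt : x - t = z by rewrite /t; ring.
have t0 : t != 0 by apply: (@nz_of _ x); rewrite xt mulrC.
have zt : z * t = 1 by [].
have zq4 : z ^+ ((q ^ 2 * q ^ 2)%N) = z.
  rewrite exprM; case: (quad_frob pq2 xq2 zx) => E; rewrite E //.
  apply: (mulfI t0); rewrite [t * z]mulrC zt.
  have : (z * t) ^+ ((q ^ 2)%N) = 1 by rewrite zt expr1n.
  by rewrite exprMn E.
have q0 : (0 < q ^ 4)%N by rewrite expn_gt0; lia.
have zq4' : z ^+ (q ^ 4 - 1)%N = 1.
  apply: (mulIf z0); rewrite mul1r -exprSr (_ : (q ^ 4 - 1).+1 = (q ^ 2 * q ^ 2)%N)%N //.
  rewrite -expnD /=; lia.
have w4 : (z ^+ 2) ^+ ((q ^ 4 - 1) %/ 2)%N = 1.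
  rewrite -exprM (_ : (2 * ((q ^ 4 - 1) %/ 2)%N = q ^ 4 - 1)%N) //.
  have : ((q ^ 4) %% 2 = 1)%N.
    have : (q %% 2 = 1)%N by lia.
    by rewrite !modn2 oddX => ->.
  lia.
have wg := pow_gcd (ltn0Sn m) wm w4.
have wk : (z ^+ 2) ^+ k = 1.
  by move: gd; rewrite -/k => /dvdnP [j ->]; rewrite mulnC exprM wg expr1n.
have zq : z ^+ q = z by rewrite qk exprS exprM wk mulr1.
have tq : t ^+ q = t.
  apply: (mulfI z0); rewrite zt.
  have : (z * t) ^+ q = 1 by rewrite zt expr1n.
  by rewrite exprMn zq.
have xzt : x = z + t by rewrite /t addrC subrK.
have : x ^+ q = x by rewrite {1}xzt exprDn_pchar // zq tq.
rewrite xq /x => /addIr /eqP; rewrite eq_sym -subr_eq0 opprK -mulr2n -mulr_natl mulf_eq0.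
rewrite (negbTE two) /= => /eqP c0.
by move: c2; rewrite c0 expr0n /= => /eqP; rewrite eq_sym oppr_eq0 oner_eq0.
Qed.


Lemma arith1 q : odd q -> ((q - 1) %/ 2 %| q * (q ^ 2 - 1) %/ 2)%N /\
   ((q + 1) %/ 2 %| q * (q ^ 2 - 1) %/ 2)%N /\ (q %| q * (q ^ 2 - 1) %/ 2)%N.
Proof.
move=> oq; have q2 : (q %% 2 = 1)%N by rewrite modn2 oq.
set k := ((q - 1) %/ 2)%N.
have qk : q = (2 * k + 1)%N by rewrite /k; lia.
have E : (q * (q ^ 2 - 1) = 2 * (k * ((k + 1) * (2 * q))))%N.
  by rewrite qk expnS expn1; nia.
rewrite E mulKn //; split; first exact: dvdn_mulr.
have -> : ((q + 1) %/ 2 = k + 1)%N by rewrite /k; lia.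
split; first by rewrite mulnCA dvdn_mulr.
by apply/dvdn_mull/dvdn_mull/dvdn_mull.
Qed.

Unset Implicit Arguments.

Theorem corollary2p4 (F : finFieldType) (n : nat) :
  odd #|F| -> (0 < n)%N ->
  let q := #|F| in
  (* (i) *)
  ((q %% 4 = 1)%N -> coprime n.+1 (q * (q ^ 2 - 1) %/ 2) ->
     forall mu : F, mu ^+ 2 = -1 ->
     forall a : F,
       a \notin [:: mu + 2; - mu + 2; mu - 2; - mu - 2] ->
       is_LCD (gen_Cn n a)) /\
  (* (ii) *)
  ((q %% 4 = 3)%N -> coprime n.+1 q ->
     (gcdn n.+1 ((q ^ 4 - 1) %/ 2) %| (q - 1) %/ 2)%N ->
     forall a : F, is_LCD (gen_Cn n a)).
Proof.
move=> oq n0 q.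
case: n n0 => [//|n] _.
have [L [f _]] := countable_algebraic_closure F.
have [p pp pF] := finPcharP F.
have pqF : p.-nat q by rewrite /q -cardsT; apply: abelem_pgroup (fin_ring_pchar_abelem pF).
have pq : [pchar L].-nat q.
  by rewrite (eq_pnat _ (fmorph_pchar f)) (eq_pnat _ (pcharf_eq pF)).
have q1 : (1 < q)%N by apply: finNzRing_gt1.
have natR : forall k, coprime k q -> k%:R != 0 :> L.
  move=> k ck; rewrite -(rmorph_nat f) fmorph_eq0 -(dvdn_pcharf pF).
  apply/negP => pk.
  have pq1 : (p %| q)%N.
    case: (p_natP pqF) => e qe; rewrite qe; apply: dvdn_exp => //.
    by case: e qe => // qe; rewrite qe in q1.
  have : (p %| gcdn k q)%N by rewrite dvdn_gcd pk pq1.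
  rewrite (eqP ck) dvdn1 => /eqP p1.
  by rewrite p1 in pp.
have two : 2%:R != 0 :> L by apply: natR; rewrite coprime2n.
have fix1 : forall b : F, f b ^+ q = f b by move=> b; rewrite -rmorphXn expf_card.
have red : forall a : F, (forall c z : L, c ^+ 2 = -1 -> z * ((c - f a) - z) = 1 ->
     z != (c - f a) - z -> (z ^+ 2) ^+ n.+2 = 1 -> False) -> coprime n.+2 q ->
     is_LCD (gen_Cn n.+1 a).
  move=> a H cq; apply: LCD_of => u Hu.
  case: (eqVneq u 0) => // u0; exfalso.
  have [c [z [c2 zx ch]]] := main_step f u0 Hu.
  set t := c - f a - z.
  have xzt : c - f a = z + t by rewrite /t; ring.
  have zt : z * t = 1 by [].
  rewrite xzt in ch.
  have [ne wm] := zcases zt ch (natR _ cq).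
  exact: (H c z c2 zx ne wm).
split.
  move=> q4 cop mu mu2 a _.
  have [A1 [A2 A3]] := arith1 oq.
  have c1 := coprime_dvdr A1 cop.
  have c2 := coprime_dvdr A2 cop.
  have c3 := coprime_dvdr A3 cop.
  apply: red c3 => c z cc zx ne wm.
  have xq : (c - f a) ^+ q = c - f a.
    have : (c - f mu) * (c + f mu) = 0.
      by rewrite -subr_sqr cc -rmorphXn mu2 rmorphN1 subrr.
    move/eqP; rewrite mulf_eq0 subr_eq0 addr_eq0 => /orP [] /eqP ->.
      by rewrite -rmorphB fix1.
    by rewrite -rmorphN -rmorphB fix1.
  exact: (case1 pq oq xq zx ne wm c1 c2).
move=> q4 cop gd a.
apply: red cop => c z cc zx _ wm.
exact: (case2 pq q4 cc zx wm gd two).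
Qed.
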